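(* Let $G=(V,E)$ be a finite $k$-regular graph, and suppose that the minimal cycle of $G$ has length $n$. Then: (1) the lift $L[G]$ is a $k$-regular graph; (2) the minimal cycle of $L[G]$ has length $2n$.
   Context: Graphs are simple (irreflexive, symmetric edge relation). A cycle of length $m\geq 3$ is a sequence of pairwise distinct vertices $v_1,\dots,v_m$ with $v_iv_{i+1}$ an edge for $i<m$ and $v_mv_1$ an edge. The lift $L[G]$ of a finite graph $G=(V,E)$ is the graph with vertex set $V\times\{0,1\}^{E}$ (pairs of a vertex and a function from the edge set to $\{0,1\}$), where $(u,f)$ and $(v,g)$ are adjacent if and only if $e=\{u,v\}\in E$, $f(e)\neq g(e)$, and $f(e')=g(e')$ for every edge $e'\neq e$. *)

(* Defs.v *)
From mathcomp Require Import all_boot.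
Set Implicit Arguments. Unset Strict Implicit. Unset Printing Implicit Defensive.

Definition simple_graph (T : finType) (e : rel T) : Prop :=
  irreflexive e /\ symmetric e.

Definition regular (T : finType) (e : rel T) (k : nat) : Prop :=
  forall x : T, #|[set y | e x y]| = k.

Definition is_cycle (T : finType) (e : rel T) (s : seq T) : Prop :=
  3 <= size s /\ uniq s /\ cycle e s.

Definition min_cycle_length (T : finType) (e : rel T) (n : nat) : Prop :=
  (exists s : seq T, is_cycle e s /\ size s = n) /\
  (forall s : seq T, is_cycle e s -> n <= size s).

Definition is_edge (T : finType) (e : rel T) : pred {set T} :=
  fun s => [exists u, exists v, e u v && (s == [set u; v])].

Definition Edge (T : finType) (e : rel T) : finType := {s : {set T} | is_edge e s}.

Definition lift_vertex (T : finType) (e : rel T) : finType :=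
  (T * {ffun Edge e -> bool})%type.

Definition lift_rel (T : finType) (e : rel T) : rel (lift_vertex e) :=
  fun p q =>
    e p.1 q.1 &&
    [exists x : Edge e,
       (val x == [set p.1; q.1]) && (p.2 x != q.2 x) &&
       [forall y : Edge e, (y != x) ==> (p.2 y == q.2 y)]].
Arguments lift_rel {T} e.
Arguments lift_vertex {T} e.
Arguments Edge {T} e.

(* Main.v *)
Require Import Defs.
From mathcomp Require Import all_boot.
From mathcomp Require Import zify.
Set Implicit Arguments. Unset Strict Implicit. Unset Printing Implicit Defensive.

Lemma cycle_nthP (X : Type) (r : rel X) (x0 : X) (s : seq X) :
  0 < size s ->
  cycle r s <-> (forall i, i < size s -> r (nth x0 s i) (nth x0 s (i.+1 %% size s))).
Proof.
case: s => [//|x p] _ /=.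
split.
- move/(pathP x0) => H i Hi.
  have := H i; rewrite size_rcons => /(_ Hi).
  rewrite -rcons_cons !nth_rcons /= Hi.
  case: (ltnP i (size p)) => Hip.
  + by rewrite modn_small.
  + have -> : i = size p by lia.
    by rewrite eqxx modnn.
- move=> H; apply/(pathP x0) => i; rewrite size_rcons => Hi.
  have := H i Hi.
  rewrite -rcons_cons !nth_rcons /= Hi.
  case: (ltnP i (size p)) => Hip.
  + by rewrite modn_small.
  + have -> : i = size p by lia.
    by rewrite eqxx modnn.
Qed.

Lemma mkseq_cycle (X : Type) (r : rel X) (f : nat -> X) m :
  0 < m -> f m = f 0 -> (forall j, j < m -> r (f j) (f j.+1)) -> cycle r (mkseq f m).
Proof.
move=> Hm Hf H.
apply/(cycle_nthP _ (f 0)); first by rewrite size_mkseq.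
rewrite size_mkseq => i Hi.
rewrite !nth_mkseq //; last by apply: ltn_pmod.
case: (ltnP i.+1 m) => Him.
- by rewrite modn_small //; apply: H.
- have E : i.+1 = m by lia.
  by rewrite E modnn -Hf -E; apply: H.
Qed.

Section G.
Variables (T : finType) (e : rel T).

Lemma edge_of (u v : T) : e u v -> is_edge e [set u; v].
Proof. by move=> H; apply/existsP; exists u; apply/existsP; exists v; rewrite H eqxx. Qed.

Definition mkE u v (H : e u v) : Edge e := @exist _ (fun s => is_edge e s) [set u; v] (edge_of H).

Lemma lift_relP (p q : lift_vertex e) :
  lift_rel e p q = e p.1 q.1 &&
    [forall y : Edge e, q.2 y == (if val y == [set p.1; q.1] then ~~ p.2 y else p.2 y)].
Proof.
rewrite /lift_rel; case He: (e p.1 q.1) => //=.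
apply/idP/idP.
- case/existsP => x /andP [/andP [/eqP Hx Hne] /forallP Hall].
  apply/forallP => y.
  case: (@eqP _ (val y) [set p.1; q.1]) => Hy.
  + have -> : y = x by by apply: val_inj; rewrite /= Hy Hx.
    by move: Hne; case: (p.2 x); case: (q.2 x).
  + have Hyx : y != x by apply/eqP => Eyx; apply: Hy; rewrite Eyx; exact: Hx.
    by have := Hall y; rewrite Hyx /= eq_sym.
- move/forallP => Hall; apply/existsP; exists (mkE He).
  rewrite /= eqxx /=.
  have := Hall (mkE He); rewrite /= eqxx => /eqP ->.
  apply/andP; split; first by case: (p.2 _).
  apply/forallP => y; apply/implyP => Hy.
  have := Hall y.
  have -> : (val y == [set p.1; q.1]) = false.
    apply/negbTE; apply: contra Hy => /eqP Hy'.
    by apply/eqP; apply: val_inj; rewrite Hy'.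
  by rewrite eq_sym => /eqP ->.
Qed.

Lemma noflip (F : nat -> {ffun Edge e -> bool}) (ES : nat -> {set T}) :
  (forall s y, F s.+1 y = (if val y == ES s then ~~ F s y else F s y)) ->
  forall y a b, a <= b -> (forall s, a <= s < b -> val y != ES s) -> F b y = F a y.
Proof.
move=> HF y a b Hab H.
move: H; rewrite -(subnKC Hab).
elim: (b - a) => [|k IH] H; first by rewrite addn0.
rewrite addnS HF.
have -> : (val y == ES (a + k)) = false by apply/negbTE; apply: H; apply/andP; split; lia.
apply: IH => s /andP [H1 H2]; apply: H; apply/andP; split; lia.
Qed.

Lemma edge_dist (W : nat -> T) d :
  2 < d -> (forall j t, 0 < t < d -> W j != W (j + t)) ->
  forall j t, 0 < t < d -> [set W j; W j.+1] != [set W (j + t); W (j + t).+1].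
Proof.
move=> Hd H j t Ht; apply/negP => /eqP E.
have H1 : W j \in [set W (j + t); W (j + t).+1] by rewrite -E set21.
have H2 : W (j + t) \in [set W j; W j.+1] by rewrite E set21.
case/set2P: H1 => H1.
  by move: (H j t Ht); rewrite H1 eqxx.
have Htd : t.+1 = d.
  case: (ltnP t.+1 d) => Hl; last by lia.
  move: (H j t.+1); rewrite addnS -H1 eqxx => K; suff: false by []; apply: K; apply/andP; split; lia.
case/set2P: H2 => H2.
  by move: (H j t Ht); rewrite H2 eqxx.
move: (H j.+1 (t.-1)).
have -> : j.+1 + t.-1 = j + t by lia.
rewrite H2 eqxx => K; suff: false by []; apply: K; apply/andP; split; lia.
Qed.


Hypothesis Hs : simple_graph e.

Lemma lift_simple : simple_graph (lift_rel e).
Proof.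
case: Hs => Hirr Hsym; split.
- by move=> p; rewrite /lift_rel Hirr.
- move=> p q; rewrite !lift_relP Hsym setUC.
  case: (e q.1 p.1) => //=.
  apply/idP/idP => /forallP H; apply/forallP => y; move: (H y);
  by case: (val y == _); case: (p.2 y); case: (q.2 y).
Qed.

Lemma lift_regular k : regular e k -> regular (lift_rel e) k.
Proof.
move=> Hr p; rewrite -(Hr p.1).
have -> : [set y | e p.1 y] = [set q.1 | q in [set q | lift_rel e p q]].
  apply/setP => v; rewrite inE; apply/idP/imsetP.
  - move=> Hv.
    exists (v, [ffun y : Edge e => if val y == [set p.1; v] then ~~ p.2 y else p.2 y]) => //.
    rewrite inE lift_relP /= Hv /=; apply/forallP => y; by rewrite ffunE.
  - by case=> q; rewrite inE lift_relP => /andP [H _] ->.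
rewrite card_in_imset // => q q'; rewrite !inE !lift_relP.
case/andP => _ /forallP H1; case/andP => _ /forallP H2 E.
move: q q' E H1 H2 => [u f] [u' f'] /= E H1 H2; subst u'.
congr (_, _); apply/ffunP => y.
by move: (H1 y) (H2 y) => /eqP -> /eqP ->.
Qed.

Lemma lift_cycle_exists c : is_cycle e c ->
  exists s, is_cycle (lift_rel e) s /\ size s = 2 * size c.
Proof.
case: Hs => Hirr Hsym.
case=> Hn [Hu Hc].
set n := size c in Hn *.
have n0 : 0 < n by lia.
have [x0 _] : exists x0 : T, true by move: n0; rewrite /n; case: (c) => [//|x ?] _; exists x.
pose W j := nth x0 c (j %% n).
have Wstep : forall j, e (W j) (W j.+1).
  move=> j; have := (proj1 (cycle_nthP e x0 n0) Hc (j %% n) (ltn_pmod _ n0)).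
  by rewrite /W -/n -addn1 modnDml addn1.
have Wper : forall j, W (j + n) = W j by move=> j; rewrite /W modnDr.
have Wdist : forall j t, 0 < t < n -> W j != W (j + t).
  move=> j t /andP [t0 tn]; rewrite /W nth_uniq ?ltn_pmod //.
  apply/negP => /eqP E.
  have : (j + t == j + 0 %[mod n]) by rewrite addn0 -E.
  by rewrite eqn_modDl mod0n modn_small // => /eqP; lia.
pose ES j := [set W j; W j.+1].
pose F j := [ffun y : Edge e => odd (count (fun s => val y == ES s) (iota 0 j))].
have Fstep : forall s y, F s.+1 y = (if val y == ES s then ~~ F s y else F s y).
  move=> s y; rewrite !ffunE -addn1 iotaD count_cat /= add0n addn0 oddD.
  by case: (val y == ES s); rewrite ?addbT ?addbF.
pose P j := (W j, F j).
have Pstep : forall j, lift_rel e (P j) (P j.+1).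
  move=> j; rewrite lift_relP /= Wstep /=; apply/forallP => y; by rewrite Fstep.
have F2n : F (2 * n) = F 0.
  apply/ffunP => y; rewrite !ffunE /= mul2n -addnn iotaD count_cat add0n.
  have -> : iota n n = map (addn n) (iota 0 n) by rewrite -iotaDl addn0.
  rewrite count_map.
  have -> : count (preim (addn n) (fun s => val y == ES s)) (iota 0 n)
          = count (fun s => val y == ES s) (iota 0 n).
    apply: eq_count => s /=; rewrite /ES (addnC n s) Wper -addSn Wper //.
  by rewrite oddD addbb.
have W2n : W (2 * n) = W 0 by rewrite mul2n -addnn Wper -(add0n n) Wper.
exists (mkseq P (2 * n)); split; last by rewrite size_mkseq.
split; first by rewrite size_mkseq; lia.
split; last first.
  apply: mkseq_cycle; first by lia.
    by rewrite /P W2n F2n.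
  by move=> j _; apply: Pstep.
rewrite map_inj_in_uniq ?iota_uniq //.
have key : forall a b, a < b < 2 * n -> P a != P b.
  move=> a b /andP [ab b2n]; apply/negP => /eqP E.
  have EW : W a = W b by move: E => [].
  have EF : F a = F b by move: E => [].
  have bn : b = a + n.
    case: (ltnP (b - a) n) => H1.
      by move: (Wdist a (b - a)); rewrite subnKC ?EW ?eqxx; [move=> K; suff: false by []; apply: K; apply/andP; split; lia | lia].
    case: (ltnP n (b - a)) => H2; last by lia.
    move: (Wdist a (b - a - n)).
    rewrite -[W (a + _)]Wper (_ : a + (b - a - n) + n = b); last by lia.
    rewrite EW eqxx => K; suff: false by []; apply: K; apply/andP; split; lia.
  subst b.
  have Ea := Wstep a.
  pose y := mkE Ea.
  have Hy1 : F a.+1 y = ~~ F a y by rewrite Fstep /= eqxx.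
  have Hy2 : F (a + n) y = F a.+1 y.
    apply: (noflip Fstep); first by lia.
    move=> s /andP [H1 H2] /=.
    have -> : s = a + (s - a) by lia.
    apply: (edge_dist (d := n)) => //; first by lia.
  by move: Hy2; rewrite Hy1 -EF; case: (F a y).
move=> a b; rewrite !mem_iota !add0n => /andP [_ Ha] /andP [_ Hb] E.
case: (ltngtP a b) => // H.
  by move: (key a b); rewrite E eqxx => K; suff: false by []; apply: K; apply/andP; split.
by move: (key b a); rewrite E eqxx => K; suff: false by []; apply: K; apply/andP; split.
Qed.

Lemma lift_cycle_lb n s : (forall c, is_cycle e c -> n <= size c) ->
  is_cycle (lift_rel e) s -> 2 * n <= size s.
Proof.
case: Hs => Hirr Hsym.
move=> Hmin [Hm [Hu Hc]].
set m := size s in Hm *.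
have m0 : 0 < m by lia.
have [p0 _] : exists p0 : lift_vertex e, true by move: m0; rewrite /m; case: (s) => [//|x ?] _; exists x.
pose P j := nth p0 s (j %% m).
have Pstep : forall j, lift_rel e (P j) (P j.+1).
  move=> j; have := (proj1 (cycle_nthP (lift_rel e) p0 m0) Hc (j %% m) (ltn_pmod _ m0)).
  by rewrite /P -/m -addn1 modnDml addn1.
have Pper : forall j, P (j + m) = P j by move=> j; rewrite /P modnDr.
have Puniq : forall a b, P a = P b -> a %% m = b %% m.
  by move=> a b /eqP; rewrite /P nth_uniq ?ltn_pmod // => /eqP.
pose W j := (P j).1.
pose F j := (P j).2.
have Wstep : forall j, e (W j) (W j.+1).
  by move=> j; move: (Pstep j); rewrite lift_relP => /andP [].
pose ES j := [set W j; W j.+1].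
have Fstep : forall s y, F s.+1 y = (if val y == ES s then ~~ F s y else F s y).
  by move=> j y; move: (Pstep j); rewrite lift_relP => /andP [_ /forallP /(_ y) /eqP].
have Wper : forall j, W (j + m) = W j by move=> j; rewrite /W Pper.
have Fper : forall j, F (j + m) = F j by move=> j; rewrite /F Pper.
have Wmod : forall j, W (j %% m) = W j by move=> j; rewrite /W /P modn_mod.
have WmodD : forall j t, W (j %% m + t) = W (j + t).
  by move=> j t; rewrite /W /P modnDml.
have nb : forall j, W j.+2 != W j.
  move=> j; apply/negP => /eqP E.
  have EES : ES j.+1 = ES j by rewrite /ES E setUC.
  have EF : F j.+2 = F j.
    apply/ffunP => y; rewrite !Fstep EES.
    by case: (val y == ES j) => //; rewrite negbK.
  have EP : P j.+2 = P j.
    by rewrite [P j.+2]surjective_pairing [P j]surjective_pairing -/(W j) -/(F j) -/(W j.+2) -/(F j.+2) E EF.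
  move: (Puniq _ _ EP) => /eqP.
  rewrite -(addn2 j) -{2}(addn0 j) eqn_modDl mod0n modn_small //; lia.
have nirr : forall j, W j.+1 != W j.
  by move=> j; apply/negP => /eqP E; move: (Wstep j); rewrite E Hirr.
pose Q d := (0 < d) && [exists i : 'I_m, W i == W (i + d)].
have Qm : exists d, Q d.
  exists m; rewrite /Q m0 /=; apply/existsP; exists (Ordinal m0).
  by rewrite Wper.
case: (ex_minnP Qm) => d /andP [d0 /existsP [i /eqP Hi]] dmin.
have H : forall j t, 0 < t < d -> W j != W (j + t).
  move=> j t /andP [t0 td]; apply/negP => /eqP E.
  have : Q t.
    rewrite /Q t0 /=; apply/existsP; exists (Ordinal (ltn_pmod j m0)).
    by rewrite /= Wmod WmodD E.
  by move/dmin; lia.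
have dm : d <= m.
  apply: dmin; rewrite /Q m0 /=; apply/existsP; exists (Ordinal m0); by rewrite Wper.
have d3 : 2 < d.
  case: (ltnP 2 d) => // d2.
  case: (eqVneq d 1) => [d1|d1].
    by move: (nirr i); rewrite Hi d1 addn1 eqxx.
  have d2' : d = 2 by lia.
  by move: (nb i); rewrite Hi d2' addn2 eqxx.
                
have nd : n <= d.
  have := Hmin (mkseq (fun t => W (i + t)) d).
  rewrite size_mkseq; apply; split; first by rewrite size_mkseq.
  split.
    rewrite map_inj_in_uniq ?iota_uniq // => a b.
    rewrite !mem_iota !add0n => /andP [_ Ha] /andP [_ Hb] E.
    case: (ltngtP a b) => // Hab.
      move: (H (i + a) (b - a)); rewrite -addnA subnKC ?E ?eqxx; last by lia.
      by move=> K; suff: false by []; apply: K; apply/andP; split; lia.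
    move: (H (i + b) (a - b)); rewrite -addnA subnKC ?E ?eqxx; last by lia.
    by move=> K; suff: false by []; apply: K; apply/andP; split; lia.
  apply: mkseq_cycle; first by lia.
    by rewrite addn0 Hi.
  by move=> j _; rewrite addnS; apply: Wstep.
              
have sub : {subset [seq ES (i + t) | t <- iota 0 d] <= [seq ES (i + u) | u <- iota d (m - d)]}.
  move=> X /mapP [t]; rewrite mem_iota add0n => /andP [_ td] ->.
  case: (boolP (has (fun u => ES (i + u) == ES (i + t)) (iota d (m - d)))).
    by case/hasP => u Hu0 /eqP <-; apply/mapP; exists u.
  move/hasPn => Hn.
  have Ee := Wstep (i + t).
  pose y := mkE Ee.
  have Hy1 : F (i + t).+1 y = ~~ F (i + t) y by rewrite Fstep /= eqxx.
  have Hy2 : F (i + d) y = F (i + t).+1 y.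
    apply: (noflip Fstep); first by lia.
    move=> s' /andP [H1 H2] /=.
    have -> : s' = (i + t) + (s' - (i + t)) by lia.
    apply: (edge_dist (d := d)) => //.
    apply/andP; split; lia.
  have Hy3 : F (i + t) y = F i y.
    apply: (noflip Fstep); first by lia.
    move=> s' /andP [H1 H2] /=; rewrite eq_sym.
    have -> : i + t = s' + (i + t - s') by lia.
    apply: (edge_dist (d := d)) => //.
    apply/andP; split; lia.
  have Hy4 : F (i + m) y = F (i + d) y.
    apply: (noflip Fstep); first by lia.
    move=> s' /andP [H1 H2] /=.
    have := Hn (s' - i); rewrite mem_iota (_ : i + (s' - i) = s'); last by lia.
    by rewrite eq_sym; apply; apply/andP; split; lia.
  by move: Hy4; rewrite Fper Hy2 Hy1 Hy3; case: (F i y).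
have := uniq_leq_size _ sub.
rewrite !size_map !size_iota.
have -> : uniq [seq ES (i + t) | t <- iota 0 d].
  rewrite map_inj_in_uniq ?iota_uniq // => a b.
  rewrite !mem_iota !add0n => /andP [_ Ha] /andP [_ Hb] E; rewrite /ES in E.
  case: (ltngtP a b) => // Hab.
    move: (@edge_dist W d d3 H (i + a) (b - a)); rewrite -addnA -addSn subnKC ?E ?eqxx; last by lia.
    by move=> K; suff: false by []; apply: K; apply/andP; split; lia.
  move: (@edge_dist W d d3 H (i + b) (a - b)); rewrite -addnA -addSn subnKC ?E ?eqxx; last by lia.
  by move=> K; suff: false by []; apply: K; apply/andP; split; lia.
move=> /(_ isT); lia.
Qed.
End G.

Theorem proposition4p2 (T : finType) (e : rel T) (k n : nat) :
  simple_graph e -> regular e k -> min_cycle_length e n ->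
  (simple_graph (lift_rel e) /\ regular (lift_rel e) k) /\
  min_cycle_length (lift_rel e) (2 * n).
Proof.
move=> Hs Hr [[c [Hc Hcn]] Hmin].
split; first by split; [apply: lift_simple | apply: lift_regular].
split.
  by have [s [Hs1 Hs2]] := lift_cycle_exists Hs Hc; exists s; rewrite Hs2 Hcn.
by move=> s; apply: lift_cycle_lb.
Qed.
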